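(* Let $D$ be the derivation of the polynomial ring $\mathbb{Q}[\alpha,\beta][a,b,u_1,u_2,u_3,u_4]$ that is $\mathbb{Q}[\alpha,\beta]$-linear (so $D(\alpha)=D(\beta)=0$), satisfies the Leibniz rule $D(fg)=D(f)g+fD(g)$, and is given on generators by $$D(a)=\alpha a u_4,\quad D(b)=\beta b u_3,\quad D(u_4)=u_1u_2,\quad D(u_3)=u_1u_2,\quad D(u_1)=u_1u_3,\quad D(u_2)=u_2u_4.$$ Then for every $n\geq0$, $D^n(ab)=ab\,P_n(u_1,u_2,u_3,u_4\mid\alpha,\beta)$.
   Context: For $\sigma=\sigma_1\cdots\sigma_m\in\mathfrak S_m$: ${\rm LRmax}(\sigma)$ is the number of $i$ with $\sigma_j<\sigma_i$ for all $j<i$; ${\rm RLmax}(\sigma)$ is the number of $i$ with $\sigma_j<\sigma_i$ for all $j>i$. With the convention $\sigma_0=\sigma_{m+1}=0$: ${\rm W}(\sigma)$ is the number of $i\in[m]$ with $\sigma_{i-1}<\sigma_i>\sigma_{i+1}$; ${\rm V}(\sigma)$ is the number of $i$ with $1<i<m$ and $\sigma_{i-1}>\sigma_i<\sigma_{i+1}$; ${\rm rdd}(\sigma)$ is the number of $i$ with $1<i\le m$ and $\sigma_{i-1}>\sigma_i>\sigma_{i+1}$; ${\rm lda}(\sigma)$ is the number of $i$ with $1\le i<m$ and $\sigma_{i-1}<\sigma_i<\sigma_{i+1}$. Define $$P_n(u_1,u_2,u_3,u_4\mid\alpha,\beta)=\sum_{\sigma\in\mathfrak S_{n+1}}u_1^{{\rm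 V}(\sigma)}u_2^{{\rm W}(\sigma)-1}u_3^{{\rm rdd}(\sigma)}u_4^{{\rm lda}(\sigma)}\alpha^{{\rm LRmax}(\sigma)-1}\beta^{{\rm RLmax}(\sigma)-1}.$$ *)

(* Defs.v *)
From HB Require Import structures.
From mathcomp Require Import all_boot all_order all_algebra all_fingroup.
From mathcomp Require Import mpoly.
Set Implicit Arguments. Unset Strict Implicit. Unset Printing Implicit Defensive.
Import GRing.Theory.
Local Open Scope ring_scope.

(* The polynomial ring Q[alpha,beta][a,b,u1,u2,u3,u4], realised as
   Q[X_0..X_7] with X_0 = alpha, X_1 = beta, X_2 = a, X_3 = b,
   X_4 = u1, X_5 = u2, X_6 = u3, X_7 = u4. *)
Notation PR := {mpoly rat[8]}.
Definition valpha : PR := 'X_(@inord 7 0).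
Definition vbeta  : PR := 'X_(@inord 7 1).
Definition va     : PR := 'X_(@inord 7 2).
Definition vb     : PR := 'X_(@inord 7 3).
Definition vu1    : PR := 'X_(@inord 7 4).
Definition vu2    : PR := 'X_(@inord 7 5).
Definition vu3    : PR := 'X_(@inord 7 6).
Definition vu4    : PR := 'X_(@inord 7 7).

(* Values of a permutation s of [m] written with values 1..m, and the
   convention sigma_0 = sigma_{m+1} = 0 (positions outside 1..m give 0). *)
Definition sv (m : nat) (s : 'S_m) (i : nat) : nat :=
  if (0 < i)%N then
    (if @insub _ (fun k => k < m)%N 'I_m i.-1 is Some k then (s k : nat).+1 else 0%N)
  else 0%N.

Definition LRmax m (s : 'S_m) : nat :=
  count (fun i => all (fun j => sv s j < sv s i)%N (iota 1 i.-1)) (iota 1 m).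
Definition RLmax m (s : 'S_m) : nat :=
  count (fun i => all (fun j => sv s j < sv s i)%N (iota i.+1 (m - i))) (iota 1 m).
Definition Wst m (s : 'S_m) : nat :=
  count (fun i => (sv s i.-1 < sv s i)%N && (sv s i.+1 < sv s i)%N) (iota 1 m).
Definition Vst m (s : 'S_m) : nat :=
  count (fun i => (sv s i < sv s i.-1)%N && (sv s i < sv s i.+1)%N) (iota 2 (m - 2)).
Definition rdd m (s : 'S_m) : nat :=
  count (fun i => (sv s i < sv s i.-1)%N && (sv s i.+1 < sv s i)%N) (iota 2 (m - 1)).
Definition lda m (s : 'S_m) : nat :=
  count (fun i => (sv s i.-1 < sv s i)%N && (sv s i < sv s i.+1)%N) (iota 1 (m - 1)).

Definition Pn (n : nat) : PR :=
  \sum_(s : 'S_n.+1)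
     vu1 ^+ Vst s * vu2 ^+ (Wst s).-1 * vu3 ^+ rdd s * vu4 ^+ lda s
     * valpha ^+ (LRmax s).-1 * vbeta ^+ (RLmax s).-1.

(* Main.v *)
Require Import Defs.
From HB Require Import structures.
From mathcomp Require Import all_boot all_order all_algebra all_fingroup.
From mathcomp Require Import mpoly.
From mathcomp Require Import zify ring.
Set Implicit Arguments. Unset Strict Implicit. Unset Printing Implicit Defensive.

Definition vl (w : seq nat) (i : nat) : nat := nth 0 (0 :: w) i.
Definition sh (x : nat) : nat := if x is 0 then 0 else x.+1.
Definition ins (j : nat) (l : seq nat) : seq nat := take j l ++ 1 :: drop j l.

Lemma sh_lt a b : (sh a < sh b) = (a < b).
Proof. by case: a; case: b. Qed.
Lemma lt1sh a : (1 < sh a) = (0 < a).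
Proof. by case: a. Qed.
Lemma shlt1 a : (sh a < 1) = (a == 0).
Proof. by case: a. Qed.
Lemma sh0 : sh 0 = 0. Proof. by []. Qed.

Lemma nth_mapS (w : seq nat) k : 0 \notin w -> nth 0 (map S w) k = sh (nth 0 w k).
Proof.
move=> h0; case: (ltnP k (size w)) => hk.
  rewrite (nth_map 0) //; case E: (nth 0 w k) => [|x] //.
  by move: h0; rewrite -E mem_nth.
by rewrite !nth_default ?size_map.
Qed.

Lemma vl_ins (w : seq nat) j i : 0 \notin w -> j <= size w ->
  vl (ins j (map S w)) i =
  if i <= j then sh (vl w i) else if i == j.+1 then 1 else sh (vl w i.-1).
Proof.
move=> h0 hj; rewrite /vl /ins.
case: i => [|i] //=.
rewrite nth_cat size_takel ?size_map //.
case: (ltnP i j) => hij.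
  by rewrite nth_take // nth_mapS // ifT.
case: (eqVneq i j) => [->|hne]; first by rewrite subnn eqxx.
rewrite ifF; last by apply/negbTE; rewrite eqSS.
have -> : i - j = (i - j).-1.+1 by lia.
rewrite /= nth_drop nth_mapS //.
case: i hij hne => [|i] hij hne /=; first by lia.
by congr (sh (nth 0 w _)); lia.
Qed.
Lemma vl_pos (w : seq nat) i : 0 \notin w -> 0 < i <= size w -> 0 < vl w i.
Proof.
move=> h0; case: i => [|i] //= hi; rewrite /vl /=.
case E: (nth 0 w i) => //.
by move: h0; rewrite -E mem_nth.
Qed.

Lemma vl_big (w : seq nat) i : size w < i -> vl w i = 0.
Proof. by case: i => [|i] //= hi; rewrite /vl /= nth_default. Qed.

Lemma vl0 w : vl w 0 = 0. Proof. by []. Qed.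

Lemma vl_inj (w : seq nat) a b : uniq w -> 0 < a <= size w -> 0 < b <= size w ->
  vl w a = vl w b -> a = b.
Proof.
move=> hu; case: a => [|a] //; case: b => [|b] //= ha hb.
by rewrite /vl /= => /eqP; rewrite nth_uniq // => /eqP ->.
Qed.

Definition cnt (Q : nat -> nat -> nat -> bool) w n :=
  count (fun i => Q (vl w i.-1) (vl w i) (vl w i.+1)) (iota 0 n).
Definition shinv (Q : nat -> nat -> nat -> bool) :=
  forall a b c, Q (sh a) (sh b) (sh c) = Q a b c.

Lemma bT (b : bool) : b -> b = true. Proof. by []. Qed.
Lemma bF (b : bool) : ~~ b -> b = false. Proof. by move/negbTE. Qed.

Lemma cnt_ins Q (w : seq nat) j : shinv Q -> 0 \notin w -> j <= size w ->
  cnt Q (ins j (map S w)) (size w).+3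
    + Q (vl w j.-1) (vl w j) (vl w j.+1) + Q (vl w j) (vl w j.+1) (vl w j.+2) =
  cnt Q w (size w).+2 + Q (sh (vl w j.-1)) (sh (vl w j)) 1
    + Q (sh (vl w j)) 1 (sh (vl w j.+1)) + Q 1 (sh (vl w j.+1)) (sh (vl w j.+2)).
Proof.
move=> hQ h0 hj; rewrite /cnt.
have e1 : (size w).+3 = j + (3 + (size w - j)) by lia.
have e2 : (size w).+2 = j + (2 + (size w - j)) by lia.
rewrite e1 e2 !iotaD !count_cat !add0n.
set w' := ins j (map S w).
have -> : count (fun i => Q (vl w' i.-1) (vl w' i) (vl w' i.+1)) (iota 0 j) =
          count (fun i => Q (vl w i.-1) (vl w i) (vl w i.+1)) (iota 0 j).
  apply: eq_in_count => i; rewrite mem_iota => /andP [_ hi].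
  rewrite /w' !vl_ins // (bT (_ : i.-1 <= j)); last by lia.
  rewrite (bT (_ : i <= j)); last by lia.
  by rewrite (bT (_ : i.+1 <= j)); last by lia.
have -> : count (fun i => Q (vl w' i.-1) (vl w' i) (vl w' i.+1)) (iota (j + 3) (size w - j)) =
          count (fun i => Q (vl w i.-1) (vl w i) (vl w i.+1)) (iota (j + 2) (size w - j)).
  rewrite (_ : j + 3 = 1 + (j + 2)); last by lia.
  rewrite (iotaDl 1 (j + 2)) count_map.
  apply: eq_in_count => i; rewrite mem_iota => /andP [hi _] /=.
  rewrite /w' !vl_ins // (bF (_ : ~~ (1 + i <= j))); last by lia.
  rewrite (bF (_ : ~~ (1 + i == j.+1))); last by lia.
  rewrite (bF (_ : ~~ ((1 + i).-1 <= j))); last by lia.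
  rewrite (bF (_ : ~~ ((1 + i).-1 == j.+1))); last by lia.
  rewrite (bF (_ : ~~ ((1 + i).+1 <= j))); last by lia.
  rewrite (bF (_ : ~~ ((1 + i).+1 == j.+1))); last by lia.
  rewrite !hQ; congr (Q (vl w _) (vl w _) (vl w _)); lia.
rewrite /= /w' !vl_ins // leqnn ltnn eqxx leq_pred.
rewrite (bF (_ : ~~ (j.+2 <= j))); last by lia.
rewrite (bF (_ : ~~ (j.+3 <= j))); last by lia.
rewrite (bF (_ : ~~ (j.+2 == j.+1))); last by lia.
rewrite (bF (_ : ~~ (j.+3 == j.+1))); last by lia.
rewrite /= !addn0; lia.
Qed.

Lemma size_ins j l : j <= size l -> size (ins j l) = (size l).+1.
Proof. move=> h; rewrite /ins size_cat /= size_takel // size_drop; lia. Qed.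

Definition LRl w := count (fun i => all (fun k => vl w k < vl w i) (iota 1 i.-1)) (iota 1 (size w)).
Definition RLl w := count (fun i => all (fun k => vl w k < vl w i) (iota i.+1 (size w - i))) (iota 1 (size w)).

Lemma iota_split a j n : j <= n -> iota a n = iota a j ++ iota (a + j) (n - j).
Proof. by move=> h; rewrite -iotaD subnKC. Qed.

Lemma LR_ins (w : seq nat) j : 0 \notin w -> j <= size w ->
  LRl (ins j (map S w)) = LRl w + (j == 0).
Proof.
move=> h0 hj; rewrite /LRl size_ins ?size_map //.
set w' := ins j (map S w).
rewrite (iota_split 1 (_ : j <= (size w).+1)) ?(iota_split 1 hj); last by lia.
rewrite subSn // add1n /= !count_cat /=.
have -> : count (fun i => all (fun k => vl w' k < vl w' i) (iota 1 i.-1)) (iota 1 j) =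
          count (fun i => all (fun k => vl w k < vl w i) (iota 1 i.-1)) (iota 1 j).
  apply: eq_in_count => i; rewrite mem_iota => /andP [hi1 hi2].
  apply: eq_in_all => k; rewrite mem_iota => /andP [hk1 hk2].
  rewrite /w' !vl_ins // (bT (_ : i <= j)); last by lia.
  by rewrite (bT (_ : k <= j)) ?sh_lt //; lia.
have -> : all (fun k => vl w' k < vl w' j.+1) (iota 1 j) = (j == 0).
  case: j hj @w' => [|j] hj w' //=.
  rewrite /w' !vl_ins // ltnn eqxx /= shlt1.
  by rewrite (bF (_ : ~~ (vl w 1 == 0))) //; rewrite -lt0n vl_pos //; lia.
rewrite (iotaDl 1 j.+1) count_map.
have -> : count (preim (addn 1) (fun i => all (fun k => vl w' k < vl w' i) (iota 1 i.-1)))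
             (iota j.+1 (size w - j)) =
          count (fun i => all (fun k => vl w k < vl w i) (iota 1 i.-1)) (iota j.+1 (size w - j)).
  apply: eq_in_count => i; rewrite mem_iota => /andP [hi1 hi2] /=.
  rewrite /w' vl_ins // (bF (_ : ~~ (1 + i <= j))); last by lia.
  rewrite (bF (_ : ~~ (1 + i == j.+1))); last by lia.
  rewrite (iota_split 1 (_ : j <= i)); last by lia.
  rewrite (iota_split 1 (_ : j <= i.-1)); last by lia.
  rewrite (_ : i - j = (i.-1 - j).+1); last by lia.
  rewrite /= add0n (_ : (1 + j).+1 = 1 + (1 + j)) // (iotaDl 1 (1 + j)) !all_cat /= all_map.
  rewrite vl_ins // (bF (_ : ~~ ((1 + j) <= j))); last by lia.
  have hp : 0 < vl w i by apply: vl_pos => //; apply/andP; split; lia.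
  rewrite add1n eqxx lt1sh hp /=.
  congr andb.
    apply: eq_in_all => k; rewrite mem_iota => /andP [hk1 hk2].
    by rewrite vl_ins // (bT (_ : k <= j)) ?sh_lt //; lia.
  apply: eq_in_all => k; rewrite mem_iota => /andP [hk1 hk2] /=.
  rewrite vl_ins // (bF (_ : ~~ (1 + k <= j))); last by lia.
  rewrite (bF (_ : ~~ (1 + k == j.+1))); last by lia.
  by rewrite sh_lt.
by rewrite addnA addnAC.
Qed.

Lemma RL_ins (w : seq nat) j : 0 \notin w -> j <= size w ->
  RLl (ins j (map S w)) = RLl w + (j == size w).
Proof.
move=> h0 hj; rewrite /RLl size_ins ?size_map //.
set w' := ins j (map S w).
rewrite (iota_split 1 (_ : j <= (size w).+1)) ?(iota_split 1 hj); last by lia.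
rewrite subSn // add1n /= !count_cat /=.
have -> : count (fun i => all (fun k => vl w' k < vl w' i) (iota i.+1 ((size w).+1 - i))) (iota 1 j) =
          count (fun i => all (fun k => vl w k < vl w i) (iota i.+1 (size w - i))) (iota 1 j).
  apply: eq_in_count => i; rewrite mem_iota => /andP [hi1 hi2].
  have hp : 0 < vl w i by apply: vl_pos => //; apply/andP; split; lia.
  rewrite (iota_split i.+1 (_ : j - i <= (size w).+1 - i)); last by lia.
  rewrite (iota_split i.+1 (_ : j - i <= size w - i)); last by lia.
  rewrite (_ : i.+1 + (j - i) = j.+1); last by lia.
  rewrite (_ : (size w).+1 - i - (j - i) = (size w - j).+1); last by lia.
  rewrite (_ : size w - i - (j - i) = size w - j); last by lia.
  rewrite /= (iotaDl 1 j.+1) !all_cat /= all_map.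
  rewrite /w' !vl_ins // (bT (_ : i <= j)); last by lia.
  rewrite ltnn eqxx lt1sh hp /=.
  congr andb.
    apply: eq_in_all => k; rewrite mem_iota => /andP [hk1 hk2].
    by rewrite vl_ins // (bT (_ : k <= j)) ?sh_lt //; lia.
  apply: eq_in_all => k; rewrite mem_iota => /andP [hk1 hk2] /=.
  rewrite vl_ins // (bF (_ : ~~ (1 + k <= j))); last by lia.
  rewrite (bF (_ : ~~ (1 + k == j.+1))); last by lia.
  by rewrite sh_lt.
have -> : all (fun k => vl w' k < vl w' j.+1) (iota j.+2 (size w - j)) = (j == size w).
  rewrite /w' vl_ins // ltnn eqxx.
  case E: (size w - j) => [|n] /=.
    by apply/esym; rewrite eqn_leq hj /= -subn_eq0 E.
  rewrite vl_ins // (bF (_ : ~~ (j.+2 <= j))); last by lia.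
  rewrite (bF (_ : ~~ (j.+2 == j.+1))); last by lia.
  have hp : 0 < vl w j.+1 by apply: vl_pos => //; apply/andP; split; lia.
  rewrite shlt1 (bF (_ : ~~ (vl w j.+1 == 0))) /=; last by rewrite -lt0n.
  by apply/esym/negbTE/eqP => hh; move: E; rewrite hh subnn.
rewrite (iotaDl 1 j.+1) count_map.
have -> : count (preim (addn 1) (fun i => all (fun k => vl w' k < vl w' i) (iota i.+1 ((size w).+1 - i))))
             (iota j.+1 (size w - j)) =
          count (fun i => all (fun k => vl w k < vl w i) (iota i.+1 (size w - i))) (iota j.+1 (size w - j)).
  apply: eq_in_count => i; rewrite mem_iota => /andP [hi1 hi2] /=.
  rewrite /w' vl_ins // (bF (_ : ~~ (1 + i <= j))); last by lia.
  rewrite (bF (_ : ~~ (1 + i == j.+1))); last by lia.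
  rewrite (_ : (size w).+1 - (1 + i) = size w - i); last by lia.
  rewrite (_ : (1 + i).+1 = 1 + i.+1) // (iotaDl 1 i.+1) all_map.
  apply: eq_in_all => k; rewrite mem_iota => /andP [hk1 hk2] /=.
  rewrite vl_ins // (bF (_ : ~~ (1 + k <= j))); last by lia.
  rewrite (bF (_ : ~~ (1 + k == j.+1))); last by lia.
  by rewrite sh_lt.
by rewrite addnA addnAC.
Qed.

Definition pk x y z := (x < y) && (z < y).
Definition vy x y z := (y < x) && (y < z).
Definition ddp x y z := (y < x) && (z < y).
Definition dap x y z := (x < y) && (y < z).
Lemma pk_sh : shinv pk. Proof. by move=> a b c; rewrite /pk !sh_lt. Qed.
Lemma vy_sh : shinv vy. Proof. by move=> a b c; rewrite /vy !sh_lt. Qed.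
Lemma ddp_sh : shinv ddp. Proof. by move=> a b c; rewrite /ddp !sh_lt. Qed.
Lemma dap_sh : shinv dap. Proof. by move=> a b c; rewrite /dap !sh_lt. Qed.

Definition Vn w := cnt vy w (size w).+2.
Definition Wn w := cnt pk w (size w).+2.
Definition rn w := cnt ddp w (size w).+2.
Definition ln w := cnt dap w (size w).+2.

Lemma LR_pos (w : seq nat) : 0 < size w -> 0 < LRl w.
Proof. by rewrite /LRl; case: (size w) => [|n] //= _; rewrite add1n. Qed.

Lemma RL_pos (w : seq nat) : 0 < size w -> 0 < RLl w.
Proof.
move=> h; rewrite /RLl -has_count; apply/hasP; exists (size w).
  by rewrite mem_iota; lia.
by rewrite subnn.
Qed.

Lemma vl_range (w : seq nat) a : 0 < vl w a -> 0 < a <= size w.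
Proof.
case: a => [|a] //; case: (ltnP (size w) a.+1) => h; last by lia.
by rewrite vl_big.
Qed.

Lemma vl_neq (w : seq nat) a b : uniq w -> a != b -> 0 < vl w a -> 0 < vl w b ->
  vl w a != vl w b.
Proof.
move=> hu hab ha hb; apply/eqP => e.
by move: hab; rewrite (vl_inj hu (vl_range ha) (vl_range hb) e) eqxx.
Qed.

Lemma vl_eq0 (w : seq nat) a : 0 \notin w -> (vl w a == 0) = ((a == 0) || (size w < a)).
Proof.
move=> h0; case: (ltnP (size w) a) => h.
  by rewrite vl_big // orbT.
case: a h => [|a] h //=.
by apply/negbTE; rewrite -lt0n vl_pos.
Qed.

Fixpoint Ls (m : nat) : seq (seq nat) :=
  if m is m'.+1 then [seq ins j (map S w) | w <- Ls m', j <- iota 0 m'.+1]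
  else [:: [::]].

Lemma LsS m : Ls m.+1 = [seq ins j (map S w) | w <- Ls m, j <- iota 0 m.+1].
Proof. by []. Qed.

Lemma size_Ls m : size (Ls m) = m`!.
Proof. by elim: m => [|m IH] //; rewrite LsS size_allpairs IH size_iota factS mulnC. Qed.

Lemma perm_ins j (l : seq nat) : perm_eq (ins j l) (1 :: l).
Proof.
rewrite /ins -cat1s perm_catCA /= perm_cons.
by rewrite cat_take_drop.
Qed.

Lemma iotaS1 m : map S (iota 1 m) = iota 2 m.
Proof. by rewrite (iotaDl 1 1). Qed.

Lemma Ls_perm m w : w \in Ls m -> perm_eq w (iota 1 m).
Proof.
elim: m w => [|m IH] w; first by rewrite inE => /eqP ->.
rewrite LsS; case/allpairsP => [[w0 j]] /= [hw0 hj ->].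
apply: perm_trans (perm_ins _ _) _.
by rewrite perm_cons -iotaS1 perm_map // IH.
Qed.

Lemma perm_props m (w : seq nat) : perm_eq w (iota 1 m) ->
  [/\ uniq w, 0 \notin w & size w = m].
Proof.
move=> h; split.
- by rewrite (perm_uniq h) iota_uniq.
- by rewrite (perm_mem h) mem_iota.
- by rewrite (perm_size h) size_iota.
Qed.

Lemma index_ins j (l : seq nat) : 1 \notin l -> j <= size l -> index 1 (ins j l) = j.
Proof.
move=> h1 hj; rewrite /ins index_cat.
have -> : (1 \in take j l) = false by apply/negbTE; apply: contra h1; apply: mem_take.
by rewrite index_head addn0 size_takel.
Qed.

Lemma rem_ins j (l : seq nat) : 1 \notin l -> rem 1 (ins j l) = l.
Proof.
move=> h1; rewrite /ins remE.
have hn : (1 \in take j l) = false by apply/negbTE; apply: contra h1; apply: mem_take.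
rewrite index_cat hn index_head addn0.
have hs : size (take j l) = size (take j l) by [].
rewrite take_cat ltnn subnn take0 cats0.
rewrite drop_cat ltnNge leqnSn /= subSn // subnn /= drop0.
by rewrite cat_take_drop.
Qed.

Lemma Ls_uniq m : uniq (Ls m).
Proof.
elim: m => [|m IH] //; rewrite LsS.
apply: allpairs_uniq => //; first exact: iota_uniq.
move=> [w1 j1] [w2 j2] /allpairsP [[a b] [ha hb [-> ->]]] /allpairsP [[c d] [hc hd [-> ->]]] /= e.
have [_ h0a sa] := perm_props (Ls_perm ha).
have [_ h0c sc] := perm_props (Ls_perm hc).
have n1 : forall u, 0 \notin u -> 1 \notin map S u.
  by move=> u hu; apply/mapP => [[k hk [ek]]]; move: hu; rewrite ek hk.
have hb' : b <= size (map S a) by rewrite size_map sa; move: hb; rewrite mem_iota add0n ltnS => /andP [].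
have hd' : d <= size (map S c) by rewrite size_map sc; move: hd; rewrite mem_iota add0n ltnS => /andP [].
have ej : b = d.
  by have := index_ins (n1 _ h0a) hb'; rewrite e index_ins // n1.
subst d; congr pair.
by apply: (inj_map succn_inj); rewrite -(rem_ins b (n1 _ h0a)) e rem_ins // n1.
Qed.

Lemma ins_rem (w : seq nat) : 1 \in w -> ins (index 1 w) (rem 1 w) = w.
Proof.
move=> h1; set j := index 1 w.
have hj : j < size w by rewrite index_mem.
have hs : size (take j w) = j by rewrite size_takel // ltnW.
rewrite /ins remE -/j take_cat hs ltnn subnn take0 cats0.
rewrite drop_cat hs ltnn subnn drop0.
by rewrite -(nth_index 0 h1) -/j -drop_nth // cat_take_drop.
Qed.

Lemma perm_Ls m (w : seq nat) : perm_eq w (iota 1 m) -> w \in Ls m.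
Proof.
elim: m w => [|m IH] w hw.
  by move: (perm_size hw); rewrite size_iota => /size0nil ->; rewrite inE.
have h1 : 1 \in w by rewrite (perm_mem hw) mem_iota.
have hr : perm_eq (rem 1 w) (iota 2 m).
  by rewrite -(perm_cons 1); apply: perm_trans _ hw; rewrite perm_sym perm_to_rem.
rewrite LsS; apply/allpairsP; exists (map predn (rem 1 w), index 1 w) => /=; split.
- apply: IH; have -> : iota 1 m = map predn (iota 2 m) by rewrite -iotaS1 -map_comp map_id.
  exact: perm_map.
- rewrite -[0 :: iota 1 m]/(iota 0 m.+1) mem_iota add0n.
  by have := perm_size hw; rewrite size_iota => <-; rewrite index_mem.
- apply/esym; rewrite -map_comp (map_id_in (s := rem 1 w)) ?ins_rem // => x.
  by rewrite (perm_mem hr) mem_iota => /andP [hx _] /=; case: x hx.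
Qed.

Lemma count_window (P : pred nat) a n N : a + n <= N ->
  (forall i, P i -> a <= i < a + n) -> count P (iota 0 N) = count P (iota a n).
Proof.
move=> hN hP.
rewrite (iota_split 0 (_ : a <= N)); last by lia.
rewrite (iota_split (0 + a) (_ : n <= N - a)); last by lia.
rewrite !count_cat add0n.
have z1 : count P (iota 0 a) = 0.
  apply/eqP; rewrite -leqn0 leqNgt -has_count; apply/hasP => [[i]].
  by rewrite mem_iota => hi /hP; lia.
have z2 : count P (iota (a + n) (N - a - n)) = 0.
  apply/eqP; rewrite -leqn0 leqNgt -has_count; apply/hasP => [[i]].
  by rewrite mem_iota => hi /hP; lia.
by rewrite z1 z2 addn0.
Qed.

Lemma Vd (w : seq nat) m : size w = m ->
  count (fun i => (vl w i < vl w i.-1) && (vl w i < vl w i.+1)) (iota 2 (m - 2)) = Vn w.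
Proof.
move=> hs; rewrite /Vn /cnt; apply/esym/count_window; first by lia.
move=> i /andP [h1 h2].
have := vl_range (leq_ltn_trans (leq0n _) h1).
have := vl_range (leq_ltn_trans (leq0n _) h2).
rewrite hs; case: i h1 h2 => [|[|i]] //= h1 h2; lia.
Qed.

Lemma Wd (w : seq nat) m : size w = m ->
  count (fun i => (vl w i.-1 < vl w i) && (vl w i.+1 < vl w i)) (iota 1 m) = Wn w.
Proof.
move=> hs; rewrite /Wn /cnt; apply/esym/count_window; first by lia.
move=> i /andP [h1 h2].
have := vl_range (leq_ltn_trans (leq0n _) h1).
rewrite hs; lia.
Qed.

Lemma rd (w : seq nat) m : size w = m ->
  count (fun i => (vl w i < vl w i.-1) && (vl w i.+1 < vl w i)) (iota 2 (m - 1)) = rn w.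
Proof.
move=> hs; rewrite /rn /cnt; apply/esym/count_window; first by lia.
move=> i /andP [h1 h2].
have := vl_range (leq_ltn_trans (leq0n _) h1).
have := vl_range (leq_ltn_trans (leq0n _) h2).
rewrite hs; case: i h1 h2 => [|[|i]] //= h1 h2; lia.
Qed.

Lemma ld (w : seq nat) m : size w = m ->
  count (fun i => (vl w i.-1 < vl w i) && (vl w i < vl w i.+1)) (iota 1 (m - 1)) = ln w.
Proof.
move=> hs; rewrite /ln /cnt; apply/esym/count_window; first by lia.
move=> i /andP [h1 h2].
have := vl_range (leq_ltn_trans (leq0n _) h1).
have := vl_range (leq_ltn_trans (leq0n _) h2).
rewrite hs; case: i h1 h2 => [|i] //= h1 h2; lia.
Qed.

Import GRing.Theory.
Local Open Scope ring_scope.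

Definition mono (a b c d e f : nat) : {mpoly rat[8]} :=
  vu1 ^+ a * vu2 ^+ b * vu3 ^+ c * vu4 ^+ d * valpha ^+ e * vbeta ^+ f.
Definition WT w := mono (Vn w) (Wn w).-1 (rn w) (ln w) (LRl w).-1 (RLl w).-1.
Definition Nda w := mono (Vn w).+1 (Wn w) (rn w) (ln w).-1 (LRl w).-1 (RLl w).-1.
Definition Ndd w := mono (Vn w).+1 (Wn w) (rn w).-1 (ln w) (LRl w).-1 (RLl w).-1.

Lemma mono_congr a b c d e f a' b' c' d' e' f' :
  a = a' -> b = b' -> c = c' -> d = d' -> e = e' -> f = f' ->
  mono a b c d e f = mono a' b' c' d' e' f'.
Proof. by move=> -> -> -> -> -> ->. Qed.

Lemma mono_front a b c d e f : mono a b c d.+1 e.+1 f = valpha * vu4 * mono a b c d e f.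
Proof. rewrite /mono !exprS; ring. Qed.
Lemma mono_end a b c d e f : mono a b c.+1 d e f.+1 = vbeta * vu3 * mono a b c d e f.
Proof. rewrite /mono !exprS; ring. Qed.
Lemma mono_u3 a b c d e f : mono a b c.+1 d e f = vu3 * mono a b c d e f.
Proof. rewrite /mono !exprS; ring. Qed.
Lemma mono_u4 a b c d e f : mono a b c d.+1 e f = vu4 * mono a b c d e f.
Proof. rewrite /mono !exprS; ring. Qed.

Lemma step_j (w : seq nat) j : uniq w -> 0 \notin w -> (0 < size w)%N -> (j <= size w)%N ->
  Wn w = (Vn w).+1 ->
  Wn (ins j (map S w)) = (Vn (ins j (map S w))).+1 /\
  WT (ins j (map S w)) =
     (j == 0)%:R * (valpha * vu4 * WT w) + (j == size w)%:R * (vbeta * vu3 * WT w)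
   + (dap (vl w j.-1) (vl w j) (vl w j.+1))%:R * Nda w
   + (vy (vl w j.-1) (vl w j) (vl w j.+1))%:R * (vu3 * WT w)
   + (ddp (vl w j) (vl w j.+1) (vl w j.+2))%:R * Ndd w
   + (vy (vl w j) (vl w j.+1) (vl w j.+2))%:R * (vu4 * WT w).
Proof.
move=> hu h0 hm hj hWV.
have hV := cnt_ins vy_sh h0 hj.
have hW := cnt_ins pk_sh h0 hj.
have hr := cnt_ins ddp_sh h0 hj.
have hl := cnt_ins dap_sh h0 hj.
have hLR := LR_ins h0 hj.
have hRL := RL_ins h0 hj.
have LRp := LR_pos hm.
have RLp := RL_pos hm.
have fy := vl_eq0 j h0.
have fz := vl_eq0 j.+1 h0.
have fx := vl_eq0 j.-1 h0.
have ft := vl_eq0 j.+2 h0.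
have dxy : (0 < vl w j)%N -> vl w j.-1 != vl w j.
  move=> hy; case: (posnP (vl w j.-1)) => [->|hx]; first by rewrite eq_sym -lt0n.
  apply: vl_neq => //; rewrite ltn_eqF // ltn_predL.
  by case/andP: (vl_range hy).
have dyz : (0 < vl w j.+1)%N -> vl w j != vl w j.+1.
  move=> hz; case: (posnP (vl w j)) => [->|hy]; first by rewrite eq_sym -lt0n.
  by apply: vl_neq => //; rewrite ltn_eqF.
have dzt : (0 < vl w j.+1)%N -> vl w j.+1 != vl w j.+2.
  move=> hz; case: (posnP (vl w j.+2)) => [->|ht]; first by rewrite -lt0n.
  by apply: vl_neq => //; rewrite ltn_eqF.
have hs : size (ins j (map S w)) = (size w).+1 by rewrite size_ins ?size_map.
rewrite /WT /Nda /Ndd /Vn /Wn /rn /ln hs.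
rewrite /Vn /Wn in hWV.
move: hWV hV hW hr hl fy fz fx ft dxy dyz dzt hLR hRL LRp RLp.
set x := vl w j.-1; set y := vl w j; set z := vl w j.+1; set t := vl w j.+2.
set V := cnt vy w _; set W := cnt pk w _; set r := cnt ddp w _; set l := cnt dap w _.
set V' := cnt vy (ins _ _) _; set W' := cnt pk (ins _ _) _.
set r' := cnt ddp (ins _ _) _; set l' := cnt dap (ins _ _) _.
set LR := LRl w; set RL := RLl w.
set LR' := LRl _; set RL' := RLl _.
clearbody x y z t V W r l V' W' r' l' LR RL LR' RL'.
rewrite /vy /pk /ddp /dap !sh_lt !lt1sh !shlt1.
move=> hWV eV eW er el fy fz fx ft dxy dyz dzt hLR hRL LRp RLp.
have jn : [|| j == 0, j == size w | (0 < j < size w)%N] by clear -hj; lia.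
move: eV eW er el.
case/or3P: jn => [/eqP j0|/eqP jm|/andP [jp jlt]].
- have [hx [hy hz]] : x = 0%N /\ y = 0%N /\ (0 < z)%N by subst j; clear -fx fy fz hm; lia.
  subst x y; clear fx fy ft dxy dyz dzt.
  have b1 : (z == 0)%N = false by clear -hz; lia.
  rewrite hz b1 /= ?andbT ?andbF => eV eW er el.
  have [e1 [e2 [e3 e4]]] : V' = V /\ W' = W /\ r' = r /\ l' = l.+1 by clear -eV eW er el; lia.
  have [e5 e6] : LR' = LR.+1 /\ RL' = RL by subst j; lia.
  subst V' W' r' l' LR' RL'; clear eV eW er el fz; try clear hLR; try clear hRL.
  have -> : (j == 0) = true by lia.
  have -> : (j == size w) = false by lia.
  rewrite /= ?mul0r ?mul1r ?addr0.
  split; first lia.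
  rewrite -mono_front; apply: mono_congr; lia.
- have [hy [hz ht]] : (0 < y)%N /\ z = 0%N /\ t = 0%N by subst j; clear -fy fz ft hm; lia.
  subst z t.
  have := dxy hy => dxy'; clear fx fy fz ft dxy dyz dzt.
  have b1 : (y == 0)%N = false by clear -hy; lia.
  rewrite hy b1 /= ?andbT ?andbF => eV eW er el.
  have [e1 [e2 [e3 e4]]] : V' = V /\ W' = W /\ r' = r.+1 /\ l' = l by clear -eV eW er el dxy'; lia.
  have [e5 e6] : LR' = LR /\ RL' = RL.+1 by subst j; lia.
  subst V' W' r' l' LR' RL'; clear eV eW er el; try clear hLR; try clear hRL.
  have -> : (j == 0) = false by lia.
  have -> : (j == size w) = true by lia.
  rewrite /= ?mul0r ?mul1r ?addr0 ?add0r.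
  split; first lia.
  rewrite ?ltn0 ?andbF ?mul0r ?addr0 -mono_end; apply: mono_congr; lia.
- have [hy hz] : (0 < y)%N /\ (0 < z)%N by clear -fy fz jp jlt; lia.
  have := dxy hy => {}dxy; have := dyz hz => {}dyz; have := dzt hz => {}dzt.
  have [e5 e6] : LR' = LR /\ RL' = RL by clear -hLR hRL jp jlt; lia.
  subst LR' RL'; clear fx fy fz ft; try clear hLR; try clear hRL.
  have -> : (j == 0) = false by clear -jp; lia.
  have -> : (j == size w) = false by clear -jlt; lia.
  have b1 : (y == 0)%N = false by clear -hy; lia.
  have b2 : (z == 0)%N = false by clear -hz; lia.
  rewrite ?mul0r ?add0r hy hz b1 b2 /=.
  have [ylz|ygz] : (y < z)%N \/ (z < y)%N by clear -dyz; lia.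
  + have b3 : (z < y)%N = false by clear -ylz; lia.
    rewrite ylz b3 /= ?mul0r ?addr0.
    have [xly|xgy] : (x < y)%N \/ (y < x)%N by clear -dxy; lia.
    * have b4 : (y < x)%N = false by clear -xly; lia.
      rewrite xly b4 /= ?andbT ?andbF => eV eW er el.
      have [e1 [e2 [e3 e4]]] : V' = V.+1 /\ W' = W.+1 /\ r' = r /\ l'.+1 = l by clear -eV eW er el; lia.
      subst V' W' r'; clear eV eW er el.
      rewrite ?mul0r ?mul1r ?addr0 ?add0r.
      split; first lia.
      apply: mono_congr; lia.
    * have b4 : (x < y)%N = false by clear -xgy; lia.
      rewrite xgy b4 /= ?andbT ?andbF => eV eW er el.
      have [e1 [e2 [e3 e4]]] : V' = V /\ W' = W /\ r' = r.+1 /\ l' = l by clear -eV eW er el; lia.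
      subst V' W' r' l'; clear eV eW er el.
      rewrite ?mul0r ?mul1r ?add0r.
      split; first lia.
      rewrite -mono_u3; apply: mono_congr; lia.
  + have b3 : (y < z)%N = false by clear -ygz; lia.
    rewrite ygz b3 /= ?mul0r ?add0r !andbF.
    have [zlt|zgt] : (z < t)%N \/ (t < z)%N by clear -dzt; lia.
    * have b4 : (t < z)%N = false by clear -zlt; lia.
      rewrite zlt b4 /= ?andbT ?andbF => eV eW er el.
      have [e1 [e2 [e3 e4]]] : V' = V /\ W' = W /\ r' = r /\ l' = l.+1 by clear -eV eW er el; lia.
      subst V' W' r' l'; clear eV eW er el.
      rewrite ?mul0r ?mul1r ?add0r.
      split; first lia.
      rewrite -mono_u4; apply: mono_congr; lia.
    * have b4 : (z < t)%N = false by clear -zgt; lia.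
      rewrite zgt b4 /= ?andbT ?andbF => eV eW er el.
      have [e1 [e2 [e3 e4]]] : V' = V.+1 /\ W' = W.+1 /\ r'.+1 = r /\ l' = l by clear -eV eW er el; lia.
      subst V' W' l'; clear eV eW er el.
      rewrite ?mul0r ?mul1r ?addr0.
      split; first lia.
      rewrite ?add0r; apply: mono_congr; lia.
Qed.

Lemma sum_count (s : seq nat) (P : pred nat) (c : {mpoly rat[8]}) :
  \sum_(j <- s) (P j)%:R * c = (count P s)%:R * c.
Proof.
elim: s => [|a s IH]; first by rewrite big_nil mul0r.
by rewrite big_cons IH /= natrD mulrDl.
Qed.

Lemma count_last (P : pred nat) m : ~~ P m.+1 ->
  count P (iota 0 m.+1) = count P (iota 0 m.+2).
Proof.
move=> h; rewrite (iota_split 0 (_ : (m.+1 <= m.+2)%N)) // count_cat subSnn /=.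
by rewrite (negbTE h) !addn0.
Qed.

Lemma count_first (P : pred nat) m : ~~ P 0%N ->
  count (fun j => P j.+1) (iota 0 m.+1) = count P (iota 0 m.+2).
Proof.
move=> h; have -> : count P (iota 0 m.+2) = (P 0%N + count P (iota 1 m.+1))%N by [].
by rewrite (negbTE h) add0n (iotaDl 1 0) count_map.
Qed.

Lemma sum_step (w : seq nat) : uniq w -> 0 \notin w -> (0 < size w)%N ->
  Wn w = (Vn w).+1 ->
  \sum_(j <- iota 0 (size w).+1) WT (ins j (map S w)) =
    (valpha * vu4 + vbeta * vu3) * WT w + (ln w)%:R * Nda w + (Vn w)%:R * (vu3 * WT w)
    + (rn w)%:R * Ndd w + (Vn w)%:R * (vu4 * WT w).
Proof.
move=> hu h0 hm hWV.
rewrite (eq_big_seq (fun j =>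
     (j == 0)%:R * (valpha * vu4 * WT w) + (j == size w)%:R * (vbeta * vu3 * WT w)
   + (dap (vl w j.-1) (vl w j) (vl w j.+1))%:R * Nda w
   + (vy (vl w j.-1) (vl w j) (vl w j.+1))%:R * (vu3 * WT w)
   + (ddp (vl w j) (vl w j.+1) (vl w j.+2))%:R * Ndd w
   + (vy (vl w j) (vl w j.+1) (vl w j.+2))%:R * (vu4 * WT w))); last first.
  move=> j; rewrite mem_iota => /andP [_ hj].
  have hj' : (j <= size w)%N by lia.
  by case: (step_j hu h0 hm hj' hWV).
rewrite !big_split /= !sum_count.
have -> : count (fun j => j == 0) (iota 0 (size w).+1) = 1%N.
  by rewrite (count_uniq_mem 0 (iota_uniq _ _)) mem_iota.
have -> : count (fun j => j == size w) (iota 0 (size w).+1) = 1%N.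
  by rewrite (count_uniq_mem (size w) (iota_uniq _ _)) mem_iota; lia.
have hb : forall k, (size w < k)%N -> vl w k = 0%N by move=> k hk; rewrite vl_big.
rewrite (count_last (P := fun j => dap (vl w j.-1) (vl w j) (vl w j.+1))); last first.
  by rewrite /dap (hb (size w).+1) // ltn0.
rewrite (count_last (P := fun j => vy (vl w j.-1) (vl w j) (vl w j.+1))); last first.
  by rewrite /vy (hb (size w).+1) // (hb (size w).+2) // ltn0 andbF.
rewrite (count_first (P := fun j => ddp (vl w j.-1) (vl w j) (vl w j.+1))); last first.
  by rewrite /ddp /=.
rewrite (count_first (P := fun j => vy (vl w j.-1) (vl w j) (vl w j.+1))); last first.
  by rewrite /vy /=.
rewrite -/(ln w) -/(Vn w) -/(rn w).
rewrite !mul1r; ring.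
Qed.

Lemma Ls_inv m w : w \in Ls m.+1 -> Wn w = (Vn w).+1.
Proof.
elim: m w => [|m IH] w.
  by rewrite LsS inE => /eqP ->; vm_compute.
rewrite LsS => /allpairsP [[w0 j] [hw0 hj ->]] /=.
have [hu h0 hs] := perm_props (Ls_perm hw0).
have hj' : (j <= size w0)%N by move: hj; rewrite mem_iota hs add0n ltnS => /andP [].
by case: (step_j hu h0 (_ : (0 < size w0)%N) hj' (IH _ hw0)) => //; rewrite hs.
Qed.

Section Der.
Variable D : {mpoly rat[8]} -> {mpoly rat[8]}.
Hypothesis hadd : forall p q, D (p + q) = D p + D q.
Hypothesis hc : forall c : rat, D c%:MP = 0.
Hypothesis hmul : forall p q, D (p * q) = D p * q + p * D q.
Hypothesis hal : D valpha = 0.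
Hypothesis hbe : D vbeta = 0.
Hypothesis hu4 : D vu4 = vu1 * vu2.
Hypothesis hu3 : D vu3 = vu1 * vu2.
Hypothesis hu1 : D vu1 = vu1 * vu3.
Hypothesis hu2 : D vu2 = vu2 * vu4.

Lemma D0 : D 0 = 0.
Proof.
have h := hadd 0 0; rewrite addr0 in h.
by apply: (addrI (D 0)); rewrite addr0 -h.
Qed.

Lemma D1 : D 1 = 0.
Proof. by rewrite -(mpolyC1 8 rat) hc. Qed.

Lemma Dsum (s : seq (seq nat)) (F : seq nat -> {mpoly rat[8]}) :
  D (\sum_(x <- s) F x) = \sum_(x <- s) D (F x).
Proof.
elim: s => [|a s IH]; first by rewrite !big_nil D0.
by rewrite !big_cons hadd IH.
Qed.

Lemma Dpow p k : D (p ^+ k) = k%:R * p ^+ k.-1 * D p.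
Proof.
elim: k => [|k IH]; first by rewrite expr0 D1 !mul0r.
rewrite exprS hmul IH; case: k IH => [|k] IH /=.
  by rewrite expr0 !mul0r !mulr0 addr0 !mul1r mulr1.
rewrite exprS; rewrite !mulrS; ring.
Qed.

Lemma Dmono a b c d e f :
  D (mono a b c d e f) = a%:R * (vu3 * mono a b c d e f) + b%:R * (vu4 * mono a b c d e f)
    + c%:R * mono a.+1 b.+1 c.-1 d e f + d%:R * mono a.+1 b.+1 c d.-1 e f.
Proof.
rewrite /mono !hmul !Dpow hal hbe hu1 hu2 hu3 hu4.
case: a => [|a]; case: b => [|b] /=; rewrite ?expr0 ?exprS; ring.
Qed.

Lemma key (w : seq nat) : uniq w -> 0 \notin w -> (0 < size w)%N ->
  Wn w = (Vn w).+1 ->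
  \sum_(j <- iota 0 (size w).+1) WT (ins j (map S w)) =
    (valpha * vu4 + vbeta * vu3) * WT w + D (WT w).
Proof.
move=> hu h0 hm hWV; rewrite sum_step // /WT Dmono /Nda /Ndd hWV /=.
ring.
Qed.

Lemma sumLs m : \sum_(w <- Ls m.+2) WT w =
  (valpha * vu4 + vbeta * vu3) * \sum_(w <- Ls m.+1) WT w + D (\sum_(w <- Ls m.+1) WT w).
Proof.
rewrite LsS big_allpairs_dep Dsum mulr_sumr -big_split.
apply: eq_big_seq => w hw.
have [hu h0 hs] := perm_props (Ls_perm hw).
have hm : (0 < size w)%N by rewrite hs.
have e := key hu h0 hm (Ls_inv hw); rewrite hs in e.
exact: e.
Qed.

End Der.

Definition tolist m (s : 'S_m) : seq nat := [seq (s i).+1 | i <- enum 'I_m].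

Lemma size_tolist m (s : 'S_m) : size (tolist s) = m.
Proof. by rewrite /tolist size_map size_enum_ord. Qed.

Lemma svE m (s : 'S_m) i : sv s i = vl (tolist s) i.
Proof.
rewrite /sv /vl; case: i => [|i] //=.
case: insubP => [k hk ek|hk].
  by rewrite -ek (nth_map k) ?size_enum_ord ?ltn_ord // nth_ord_enum.
by rewrite nth_default // size_tolist leqNgt.
Qed.

Lemma iota_S a n : map S (iota a n) = iota a.+1 n.
Proof. by elim: n a => //= n IH a; rewrite IH. Qed.

Lemma tolist_perm m (s : 'S_m) : perm_eq (tolist s) (iota 1 m).
Proof.
have -> : tolist s = map S (map val (map s (enum 'I_m))) by rewrite /tolist -!map_comp.
rewrite -iota_S -val_enum_ord; apply: perm_map; apply: perm_map.
apply: uniq_perm; first by rewrite map_inj_uniq ?enum_uniq //; exact: perm_inj.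
  exact: enum_uniq.
move=> x; rewrite mem_enum; apply/mapP; exists (s^-1 x)%g; first by rewrite mem_enum.
by rewrite permKV.
Qed.

Lemma tolist_inj m : injective (@tolist m).
Proof.
move=> s t /eq_in_map e; apply/permP => i.
by apply: val_inj; apply/succn_inj; apply: e; rewrite mem_enum.
Qed.

Lemma size_index_enum (T : finType) : size (index_enum T) = #|T|.
Proof. rewrite cardT enumT; exact: erefl. Qed.

Lemma bridge m (F : seq nat -> {mpoly rat[8]}) :
  \sum_(s : 'S_m) F (tolist s) = \sum_(w <- Ls m) F w.
Proof.
rewrite -(big_map (@tolist m) xpredT F); apply: perm_big.
have u1 : uniq (map (@tolist m) (index_enum {perm 'I_m})).
  by rewrite map_inj_uniq ?index_enum_uniq //; exact: tolist_inj.
apply: uniq_perm => //; first exact: Ls_uniq.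
have sub : {subset map (@tolist m) (index_enum {perm 'I_m}) <= Ls m}.
  by move=> w /mapP [s _ ->]; apply: perm_Ls; exact: tolist_perm.
have sz : (size (Ls m) <= size (map (@tolist m) (index_enum {perm 'I_m})))%N.
  by rewrite size_map size_Ls -card_Sn size_index_enum.
by have [_ h] := uniq_min_size u1 sub sz.
Qed.

Lemma stats_eq m (s : 'S_m) :
  [/\ Vst s = Vn (tolist s), Wst s = Wn (tolist s), rdd s = rn (tolist s),
      lda s = ln (tolist s) & LRmax s = LRl (tolist s) /\ RLmax s = RLl (tolist s)].
Proof.
have hs := size_tolist s.
split.
- by rewrite /Vst; under eq_count => i do rewrite !svE; exact: Vd.
- by rewrite /Wst; under eq_count => i do rewrite !svE; exact: Wd.
- by rewrite /rdd; under eq_count => i do rewrite !svE; exact: rd.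
- by rewrite /lda; under eq_count => i do rewrite !svE; exact: ld.
- split.
    rewrite /LRmax /LRl hs; apply: eq_count => i; apply: eq_all => k.
    by rewrite !svE.
  rewrite /RLmax /RLl hs; apply: eq_count => i; apply: eq_all => k.
  by rewrite !svE.
Qed.

Lemma Pn_eq n : Pn n = \sum_(w <- Ls n.+1) WT w.
Proof.
rewrite /Pn -(bridge n.+1 WT); apply: eq_bigr => s _.
have [e1 e2 e3 e4 [e5 e6]] := stats_eq s.
by rewrite /WT /mono e1 e2 e3 e4 e5 e6.
Qed.

Lemma Pn0 : Pn 0 = 1.
Proof.
rewrite Pn_eq /= big_cons big_nil addr0.
have -> : WT [:: 1%N] = mono 0 0 0 0 0 0 by [].
by rewrite /mono !expr0 !mul1r.
Qed.

Unset Implicit Arguments.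
Theorem theorem3p1 (D : {mpoly rat[8]} -> {mpoly rat[8]}) :
  (forall p q, D (p + q) = D p + D q) ->
  (forall c : rat, D c%:MP = 0) ->
  (forall p q, D (p * q) = D p * q + p * D q) ->
  D valpha = 0 -> D vbeta = 0 ->
  D va = valpha * va * vu4 -> D vb = vbeta * vb * vu3 ->
  D vu4 = vu1 * vu2 -> D vu3 = vu1 * vu2 ->
  D vu1 = vu1 * vu3 -> D vu2 = vu2 * vu4 ->
  forall n : nat, iter n D (va * vb) = va * vb * Pn n.
Proof.
move=> hadd hc hmul hal hbe ha hb hu4 hu3 hu1 hu2 n.
elim: n => [|n IH]; first by rewrite /= Pn0 mulr1.
rewrite iterS IH hmul hmul ha hb !Pn_eq (sumLs hadd hc hmul hal hbe hu4 hu3 hu1 hu2).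
ring.
Qed.
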